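(* Let $d\ge2$, $L\ge2$, $\sigma>0$ and define, with $c_1(n)=1+n\sigma^2$, $c_2(n)=1+\sigma^2(d+n)$, $c_3(\sigma,L)=16\sigma^2c_2(6)+8\sigma^2(L-1)c_1(6)+4\sigma^2(L-1)c_2(3)+\sigma^2(L-1)(L-2)c_1(6)+4c_2(8)+4(L-1)c_1(5)+2(L-1)c_2(4)+(L-1)(L-2)c_1(4)+4\sigma^2(L-1)$, and $\lambda^\star(\sigma,L)=\dfrac{2Lc_2(4)+L(L-1)c_1(4)}{c_3(\sigma,L)}$. Consider the function $\mathcal{R}^<(\kappa_0,\kappa_1)=A(\kappa_0^4+\kappa_1^4)+B(\kappa_0^2+\kappa_1^2)+C\kappa_0^2\kappa_1^2+D$ on $[-1,1]^2$ with $\lambda=\lambda^\star(\sigma,L)$. Then the points $(\pm1,\pm1)$ are global minima of $\mathcal{R}^<$ on $[-1,1]^2$.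
   Context: The constants (depending on $\lambda,\sigma,L,d$) are $A=\frac{2\lambda^2}{L^2}c_2(8)+\frac{2\lambda^2(L-1)}{L^2}c_1(5)+\frac{\lambda^2(L-1)}{L^2}c_2(4)+\frac{\lambda^2(L-1)(L-2)}{2L^2}c_1(4)$, $B=-\frac{2\lambda}{L}c_2(4)+\frac{16\lambda^2\sigma^2}{L^2}c_2(6)+\frac{8\lambda^2\sigma^2(L-1)}{L^2}c_1(6)-\frac{\lambda(L-1)}{L}c_1(4)+\frac{4\lambda^2\sigma^2(L-1)}{L^2}c_2(3)+\frac{\lambda^2\sigma^2(L-1)(L-2)}{L^2}c_1(6)$, $C=\frac{4\lambda^2\sigma^2(L-1)}{L^2}$, $D=c_1(d)-\frac{8\lambda\sigma^2}{L}c_2(2)+\frac{32\lambda^2\sigma^4}{L^2}c_2(4)+\frac{64\lambda^2\sigma^6(L-1)}{L^2}-\frac{8\lambda\sigma^4(L-1)}{L}+\frac{8\lambda^2\sigma^4(L-1)}{L^2}c_2(2)+\frac{8\lambda^2\sigma^6(L-1)(L-2)}{L^2}$. This function equals the attention risk $\mathcal{R}(\mu_0,\mu_1)=\frac1L\sum_\ell\mathbb{E}\|X_\ell-T^{\mathrm{lin},\mu_0,\mu_1}(\mathbb{X})_\ell\|^2$ on the manifold $\{(\mu_0,\mu_1)\in(\mathbb{S}^{d-1})^2:\langle\mu_1^\star,\mu_0\rangle=\langle\mu_0^\star,\mu_1\rangle=\langle\mu_0,\mu_1\rangle=0\}$, written in terms of $\kappa_0=\langle\mu_0^\star,\mu_0\rangle$,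 $\kappa_1=\langle\mu_1^\star,\mu_1\rangle$, for data i.i.d. from $\frac12\mathcal{N}(\mu_0^\star,\sigma^2I_d)+\frac12\mathcal{N}(\mu_1^\star,\sigma^2I_d)$ with orthonormal centroids, where $T^{\mathrm{lin},\mu_0,\mu_1}(\mathbb{X})_\ell=\frac{2}{L}\sum_k\lambda X_\ell^\top(\mu_0\mu_0^\top+\mu_1\mu_1^\top)X_kX_k$. *)

(* Defs.v *)
From Stdlib Require Import Reals Lra.
Open Scope R_scope.

Definition c1 (sigma n : R) : R := 1 + n * sigma ^ 2.
Definition c2 (sigma d n : R) : R := 1 + sigma ^ 2 * (d + n).

Definition coefA (lam sigma L d : R) : R :=
  2 * lam ^ 2 / L ^ 2 * c2 sigma d 8
  + 2 * lam ^ 2 * (L - 1) / L ^ 2 * c1 sigma 5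
  + lam ^ 2 * (L - 1) / L ^ 2 * c2 sigma d 4
  + lam ^ 2 * (L - 1) * (L - 2) / (2 * L ^ 2) * c1 sigma 4.

Definition coefB (lam sigma L d : R) : R :=
  - (2 * lam / L) * c2 sigma d 4
  + 16 * lam ^ 2 * sigma ^ 2 / L ^ 2 * c2 sigma d 6
  + 8 * lam ^ 2 * sigma ^ 2 * (L - 1) / L ^ 2 * c1 sigma 6
  - lam * (L - 1) / L * c1 sigma 4
  + 4 * lam ^ 2 * sigma ^ 2 * (L - 1) / L ^ 2 * c2 sigma d 3
  + lam ^ 2 * sigma ^ 2 * (L - 1) * (L - 2) / L ^ 2 * c1 sigma 6.

Definition coefC (lam sigma L : R) : R :=
  4 * lam ^ 2 * sigma ^ 2 * (L - 1) / L ^ 2.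

Definition coefD (lam sigma L d : R) : R :=
  c1 sigma d
  - 8 * lam * sigma ^ 2 / L * c2 sigma d 2
  + 32 * lam ^ 2 * sigma ^ 4 / L ^ 2 * c2 sigma d 4
  + 64 * lam ^ 2 * sigma ^ 6 * (L - 1) / L ^ 2
  - 8 * lam * sigma ^ 4 * (L - 1) / L
  + 8 * lam ^ 2 * sigma ^ 4 * (L - 1) / L ^ 2 * c2 sigma d 2
  + 8 * lam ^ 2 * sigma ^ 6 * (L - 1) * (L - 2) / L ^ 2.

Definition c3 (sigma L d : R) : R :=
  16 * sigma ^ 2 * c2 sigma d 6
  + 8 * sigma ^ 2 * (L - 1) * c1 sigma 6
  + 4 * sigma ^ 2 * (L - 1) * c2 sigma d 3
  + sigma ^ 2 * (L - 1) * (L - 2) * c1 sigma 6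
  + 4 * c2 sigma d 8
  + 4 * (L - 1) * c1 sigma 5
  + 2 * (L - 1) * c2 sigma d 4
  + (L - 1) * (L - 2) * c1 sigma 4
  + 4 * sigma ^ 2 * (L - 1).

Definition lamstar (sigma L d : R) : R :=
  (2 * L * c2 sigma d 4 + L * (L - 1) * c1 sigma 4) / c3 sigma L d.

Definition risk_lt (lam sigma L d k0 k1 : R) : R :=
  coefA lam sigma L d * (k0 ^ 4 + k1 ^ 4)
  + coefB lam sigma L d * (k0 ^ 2 + k1 ^ 2)
  + coefC lam sigma L * (k0 ^ 2 * k1 ^ 2)
  + coefD lam sigma L d.

(* Main.v *)
Require Import Defs.
From Stdlib Require Import Reals Lra Psatz.
Open Scope R_scope.

Theorem proposition10 (d L : nat) (sigma : R) :
  (2 <= d)%nat -> (2 <= L)%nat -> 0 < sigma ->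
  let lam := lamstar sigma (INR L) (INR d) in
  forall s0 s1 : R, (s0 = 1 \/ s0 = -1) -> (s1 = 1 \/ s1 = -1) ->
  forall k0 k1 : R, -1 <= k0 <= 1 -> -1 <= k1 <= 1 ->
    risk_lt lam sigma (INR L) (INR d) s0 s1
    <= risk_lt lam sigma (INR L) (INR d) k0 k1.
Proof.
  intros Hd HL Hs lam s0 s1 H0 H1 k0 k1 Hk0 Hk1.
  assert (Ld : 2 <= INR L) by (apply (le_INR 2); exact HL).
  assert (Dd : 2 <= INR d) by (apply (le_INR 2); exact Hd).
  set (Lr := INR L) in *. set (dr := INR d) in *.
  assert (S2 : 0 < sigma ^ 2) by (apply pow_lt; exact Hs).
  set (s2 := sigma ^ 2) in *.
  assert (Ec3 : c3 sigma Lr dr =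
    16 * s2 * (1 + s2 * (dr + 6))
  + 8 * s2 * (Lr - 1) * (1 + 6 * s2)
  + 4 * s2 * (Lr - 1) * (1 + s2 * (dr + 3))
  + s2 * (Lr - 1) * (Lr - 2) * (1 + 6 * s2)
  + 4 * (1 + s2 * (dr + 8))
  + 4 * (Lr - 1) * (1 + 5 * s2)
  + 2 * (Lr - 1) * (1 + s2 * (dr + 4))
  + (Lr - 1) * (Lr - 2) * (1 + 4 * s2)
  + 4 * s2 * (Lr - 1)) by (unfold c3, Defs.c1, Defs.c2, s2; ring).
  assert (Pc3 : 0 < c3 sigma Lr dr).
  { rewrite Ec3.
    assert (0 <= s2 * (Lr - 1) * (Lr - 2) * (1 + 6 * s2)).
    { apply Rmult_le_pos; [|lra]. apply Rmult_le_pos; [|lra].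
      apply Rmult_le_pos; lra. }
    assert (0 <= (Lr - 1) * (Lr - 2) * (1 + 4 * s2)).
    { apply Rmult_le_pos; [|lra]. apply Rmult_le_pos; lra. }
    assert (0 <= s2 * (dr + 6)) by (apply Rmult_le_pos; lra).
    assert (0 <= s2 * (dr + 3)) by (apply Rmult_le_pos; lra).
    assert (0 <= s2 * (dr + 8)) by (apply Rmult_le_pos; lra).
    assert (0 <= s2 * (dr + 4)) by (apply Rmult_le_pos; lra).
    assert (0 <= s2 * (1 + s2 * (dr + 6))) by (apply Rmult_le_pos; lra).
    assert (0 <= s2 * (Lr - 1) * (1 + 6 * s2)).
    { apply Rmult_le_pos; [|lra]. apply Rmult_le_pos; lra. }
    assert (0 <= s2 * (Lr - 1) * (1 + s2 * (dr + 3))).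
    { apply Rmult_le_pos; [|lra]. apply Rmult_le_pos; lra. }
    assert (0 <= (Lr - 1) * (1 + 5 * s2)) by (apply Rmult_le_pos; lra).
    assert (0 <= (Lr - 1) * (1 + s2 * (dr + 4))) by (apply Rmult_le_pos; lra).
    assert (0 <= s2 * (Lr - 1)) by (apply Rmult_le_pos; lra).
    lra. }
  assert (HB : coefB lam sigma Lr dr = - 2 * coefA lam sigma Lr dr - coefC lam sigma Lr).
  { unfold lam, lamstar. rewrite Ec3 in *. unfold coefA, coefB, coefC, Defs.c1, Defs.c2.
    fold s2. field. split; lra. }
  assert (HA : 0 <= coefA lam sigma Lr dr).
  { unfold coefA, Defs.c1, Defs.c2. fold s2.
    assert (0 <= lam ^ 2 / Lr ^ 2).
    { apply Rmult_le_pos. apply pow2_ge_0. apply Rlt_le, Rinv_0_lt_compat, pow_lt; lra. }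
    assert (0 <= s2 * (dr + 8)) by (apply Rmult_le_pos; lra).
    assert (0 <= s2 * (dr + 4)) by (apply Rmult_le_pos; lra).
    assert (0 <= (Lr - 1) * (Lr - 2)) by (apply Rmult_le_pos; lra).
    replace (2 * lam ^ 2 / Lr ^ 2 * (1 + s2 * (dr + 8)) +
     2 * lam ^ 2 * (Lr - 1) / Lr ^ 2 * (1 + 5 * s2) +
     lam ^ 2 * (Lr - 1) / Lr ^ 2 * (1 + s2 * (dr + 4)) +
     lam ^ 2 * (Lr - 1) * (Lr - 2) / (2 * Lr ^ 2) * (1 + 4 * s2))
     with (lam ^ 2 / Lr ^ 2 * (2 * (1 + s2 * (dr + 8)) + 2 * (Lr - 1) * (1 + 5 * s2)
        + (Lr - 1) * (1 + s2 * (dr + 4)) + (Lr - 1) * (Lr - 2) / 2 * (1 + 4 * s2)))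
     by (field; lra).
    apply Rmult_le_pos; [lra|]. nra. }
  assert (HC : 0 <= coefC lam sigma Lr).
  { unfold coefC. fold s2.
    replace (4 * lam ^ 2 * s2 * (Lr - 1) / Lr ^ 2) with
      (lam ^ 2 / Lr ^ 2 * (4 * s2 * (Lr - 1))) by (field; lra).
    apply Rmult_le_pos.
    apply Rmult_le_pos. apply pow2_ge_0. apply Rlt_le, Rinv_0_lt_compat, pow_lt; lra.
    nra. }
  unfold risk_lt. rewrite HB.
  set (A := coefA lam sigma Lr dr) in *. set (C := coefC lam sigma Lr) in *.
  assert (E0 : s0 ^ 2 = 1) by (destruct H0; subst; ring).
  assert (E1 : s1 ^ 2 = 1) by (destruct H1; subst; ring).
  replace (s0 ^ 4) with ((s0^2)^2) by ring.
  replace (s1 ^ 4) with ((s1^2)^2) by ring.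
  replace (k0 ^ 4) with ((k0^2)^2) by ring.
  replace (k1 ^ 4) with ((k1^2)^2) by ring.
  rewrite E0, E1.
  assert (X0 : 0 <= 1 - k0 ^ 2) by nra.
  assert (X1 : 0 <= 1 - k1 ^ 2) by nra.
  set (x := k0 ^ 2) in *. set (y := k1 ^ 2) in *.
  assert (0 <= A * ((1 - x) ^ 2 + (1 - y) ^ 2)) by (apply Rmult_le_pos; nra).
  assert (0 <= C * ((1 - x) * (1 - y))) by (apply Rmult_le_pos; nra).
  nra.
Qed.
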